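(* Let $n\ge1$ and $\pi\in\mathfrak S_n$. For every tree $T_\sigma\in\mathrm{Orb}(T_\pi)$ (with $\sigma\in\mathfrak S_n$) one has $\mathrm{as}(\sigma)\ge \mathrm{leaf}(T_\pi)$, and there is exactly one tree $T_{\sigma}\in\mathrm{Orb}(T_\pi)$ with $\mathrm{as}(\sigma)=\mathrm{leaf}(T_\pi)$.
   Context: All trees are rooted binary trees in which each child of a node is designated as a left or a right child. For a finite totally ordered set $Y$, a min–max tree on $Y$ is such a tree whose nodes are labeled bijectively by $Y$ so that the label of each node is either the minimum or the maximum of the labels in its subtree. A node with at least one child is inner; an inner node is a min-node (resp. max-node) if its label is the minimum (resp. maximum) of the labels of its subtree. An HR-tree is a min–max tree in which every inner node $s$ has a nonempty right subtree containing the maximum label of the subtree of $s$ if $s$ is a min-node, and the minimum label of that subtree if $s$ is a max-node. The reading word $w(T)$ is the in-order reading $w(T)=w(L)\,\ell\,w(R)$ ($\ell$ the root label, $L,R$ the left and right subtrees). The map $T\mapsto w(T)$ is a bijection from HR-trees labeled by $[n]$ onto $\mathfrak S_n$; $T_\pi$ denotes the HR-tree with $w(T_\pi)=\pi$. $\mathrm{leaf}(T)$ is the number of leaves of $T$. HR-action: for $i\in[n]$ and an HR-tree $T_\pi$, let $v$ be the node labeled $\pi_i$. If $v$ is a leaf, $\psi_i(T_\pi)=T_\pi$. Otherwise let $R$ be the set consisting of $\pi_i$ and the labels of the right subtree of $v$; relabel the nodes of $v$ and its right subtree, keeping the shape, so that $v$ receives $\max R$ if $v$ is a min-node and $\min R$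 if $v$ is a max-node, and the nodes of the right subtree receive the remaining elements of $R$ by the order-preserving bijection from their old labels; all other labels are unchanged. The $\psi_i$ are pairwise commuting involutions on the set of HR-trees labeled by $[n]$, and $\mathrm{Orb}(T)$ denotes the set of all trees obtained from $T$ by compositions of the $\psi_i$. For $\pi\in\mathfrak S_n$, an alternating subsequence is a subsequence $\pi_{i_1}\pi_{i_2}\cdots\pi_{i_k}$ ($i_1<\dots<i_k$) with $\pi_{i_1}>\pi_{i_2}<\pi_{i_3}>\cdots$ (a single letter counts, with $k=1$); $\mathrm{as}(\pi)$ is the maximal length of an alternating subsequence. *)

(* Defs.v *)
From mathcomp Require Import all_boot.
Set Implicit Arguments. Unset Strict Implicit. Unset Printing Implicit Defensive.

Inductive btree : Type := BEmpty | BNode of btree & nat & btree.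

Definition is_empty (t : btree) : bool := if t is BEmpty then true else false.

Fixpoint word (t : btree) : seq nat :=
  match t with BEmpty => [::] | BNode l a r => word l ++ a :: word r end.

Fixpoint nleaves (t : btree) : nat :=
  match t with
  | BEmpty => 0
  | BNode l _ r => if is_empty l && is_empty r then 1 else nleaves l + nleaves r
  end.

Definition seqmax (s : seq nat) : nat := foldr maxn 0 s.
Definition seqmin (s : seq nat) : nat := foldr minn (head 0 s) s.

Definition is_min_node l a r : bool := all (fun y => a <= y) (word (BNode l a r)).
Definition is_max_node l a r : bool := all (fun y => y <= a) (word (BNode l a r)).

Definition hr_node_ok l a r : bool :=
  let s := word (BNode l a r) in
  (is_empty l && is_empty r) ||
  [&& is_min_node l a r || is_max_node l a r,
      ~~ is_empty r,
      is_min_node l a r ==> (seqmax s \in word r) &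
      is_max_node l a r ==> (seqmin s \in word r)].

Fixpoint all_nodes (P : btree -> nat -> btree -> bool) (t : btree) : bool :=
  match t with
  | BEmpty => true
  | BNode l a r => [&& P l a r, all_nodes P l & all_nodes P r]
  end.

Definition is_HR (t : btree) : bool := uniq (word t) && all_nodes hr_node_ok t.

Fixpoint relabel (f : nat -> nat) (t : btree) : btree :=
  match t with
  | BEmpty => BEmpty
  | BNode l a r => BNode (relabel f l) (f a) (relabel f r)
  end.

Definition hr_act (l : btree) (a : nat) (r : btree) : btree :=
  if is_empty l && is_empty r then BNode l a r else
  let R := a :: word r in
  let newa := if is_min_node l a r then seqmax R else seqmin R in
  let rest := sort leq (rem newa R) in
  let old := sort leq (word r) in
  BNode l newa (relabel (fun y => nth 0 rest (index y old)) r).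

(* psi i : HR-action at the node in in-order position i (0-based), i.e. the
   node labelled by the i-th letter of the reading word; identity if out of
   range. *)
Fixpoint psi (i : nat) (t : btree) : btree :=
  match t with
  | BEmpty => BEmpty
  | BNode l a r =>
      let k := size (word l) in
      if i < k then BNode (psi i l) a r
      else if i == k then hr_act l a r
      else BNode l a (psi (i - k.+1) r)
  end.

Inductive in_orb (T : btree) : btree -> Prop :=
  | orb_refl : in_orb T T
  | orb_step T' i : in_orb T T' -> i < size (word T') -> in_orb T (psi i T').

Definition alternating (s : seq nat) : bool :=
  [forall k : 'I_(size s),
     (k.+1 < size s) ==>
       (if odd k then nth 0 s k < nth 0 s k.+1 else nth 0 s k.+1 < nth 0 s k)].

Definition alt_len (s : seq nat) : nat :=
  \max_(m : (size s).-tuple bool | alternating (mask m s)) size (mask m s).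

(* Main.v *)
Require Import Defs.
From mathcomp Require Import all_boot zify.
Set Implicit Arguments. Unset Strict Implicit. Unset Printing Implicit Defensive.

Fixpoint chg (c : bool) (s : seq nat) : nat :=
  match s with
  | x :: ((y :: _) as s') => (c != (x < y)) + chg (x < y) s'
  | _ => 0 end.
Fixpoint lastd (c : bool) (s : seq nat) : bool :=
  match s with
  | x :: ((y :: _) as s') => lastd (x < y) s'
  | _ => c end.

Lemma chg_cons c x s : s != [::] ->
  chg c (x :: s) = (c != (x < head 0 s)) + chg (x < head 0 s) s.
Proof. by case: s. Qed.
Lemma lastd_cons c x s : s != [::] -> lastd c (x :: s) = lastd (x < head 0 s) s.
Proof. by case: s. Qed.

Lemma chg_cat c s1 s2 : s1 != [::] -> s2 != [::] ->
  chg c (s1 ++ s2) = chg c s1 + (lastd c s1 != (last 0 s1 < head 0 s2))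
                     + chg (last 0 s1 < head 0 s2) s2.
Proof.
elim: s1 c => [//|x s1 IH] c _ Hs2.
case: s1 IH => [|y s1] IH; first by rewrite cat1s chg_cons.
have -> : chg c ((x :: y :: s1) ++ s2) = (c != (x < y)) + chg (x < y) ((y :: s1) ++ s2) by [].
by rewrite IH //= !addnA.
Qed.

Lemma lastd_cat c s1 s2 : s1 != [::] -> s2 != [::] ->
  lastd c (s1 ++ s2) = lastd (last 0 s1 < head 0 s2) s2.
Proof.
elim: s1 c => [//|x s1 IH] c _ Hs2.
case: s1 IH => [|y s1] IH; first by rewrite cat1s lastd_cons.
have -> : lastd c ((x :: y :: s1) ++ s2) = lastd (x < y) ((y :: s1) ++ s2) by [].
by rewrite IH.
Qed.

Lemma chg_rcons c s z : s != [::] ->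
  chg c (rcons s z) = chg c s + (lastd c s != (last 0 s < z)).
Proof. by move=> Hs; rewrite -cats1 chg_cat //= addn0. Qed.

Lemma lastd_rcons c s z : s != [::] -> lastd c (rcons s z) = (last 0 s < z).
Proof. by move=> Hs; rewrite -cats1 lastd_cat. Qed.

Lemma lastd_odd c s : lastd c s = odd (chg c s) (+) c.
Proof.
elim: s c => [|x s IH] c; first by case: c.
case: s IH => [|y s] IH; first by case: c.
have -> : lastd c [:: x, y & s] = lastd (x < y) (y :: s) by [].
have -> : chg c [:: x, y & s] = (c != (x < y)) + chg (x < y) (y :: s) by [].
rewrite IH oddD oddb.
by case: c; case: (x < y); case: (odd _).
Qed.

Definition altc (s : seq nat) k :=
  if odd k then nth 0 s k < nth 0 s k.+1 else nth 0 s k.+1 < nth 0 s k.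

Lemma altP s : reflect (forall k, k.+1 < size s -> altc s k) (alternating s).
Proof.
apply: (iffP forallP) => H k.
  move=> Hk; have := H (Ordinal (ltnW Hk)); by rewrite /= Hk.
by apply/implyP => /H.
Qed.

Lemma alt_rcons u z : alternating (rcons u z) =
  alternating u && ((u == [::]) || (if odd (size u) then z < last 0 u else last 0 u < z)).
Proof.
apply/idP/idP.
  move/altP => H; apply/andP; split.
    apply/altP => k Hk; have := H k; rewrite size_rcons /altc !nth_rcons Hk (ltnW Hk).
    by apply; apply: ltnW.
  case: (altP (rcons u z)) => // _.
  case Hu: (u == [::]) => //=.
  case Hsz: (size u) => [|k]; first by move: Hu; rewrite -size_eq0 Hsz.
  have := H k; rewrite size_rcons Hsz ltnSn => /(_ isT).
  rewrite /altc !nth_rcons Hsz ltnSn eqxx ltnn -(nth_last 0 u) Hsz /=.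
  by case: (odd k).
case/andP => /altP H1 H2; apply/altP => k; rewrite size_rcons ltnS => Hk.
rewrite /altc !nth_rcons.
case: (ltngtP k.+1 (size u)) Hk => [Hk _|//|Hk _].
  exact: H1.
have Hu : u != [::] by rewrite -size_eq0 -Hk.
move: H2; rewrite (negbTE Hu) /= -(nth_last 0 u) -Hk /=.
by case: (odd k).
Qed.

Lemma rcons_subseq2 (u s : seq nat) z : subseq u s -> subseq (rcons u z) (rcons s z).
Proof. by move=> H; rewrite -!cats1 cat_subseq // subseq_refl. Qed.

Lemma last_in0 s : s != [::] -> last 0 s \in s.
Proof. by case: s => // x s _; exact: mem_last. Qed.

Lemma lastd_true s : lastd true s = odd (chg true s).+1.
Proof. by rewrite lastd_odd /=; case: (odd _). Qed.

Lemma alt_upper s : uniq s -> forall u, subseq u s -> u != [::] -> alternating u ->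
  size u <= (chg true s).+1 /\
  (size u = (chg true s).+1 ->
     if lastd true s then last 0 u <= last 0 s else last 0 s <= last 0 u).
Proof.
elim/last_ind: s => [|s0 z IH] Us u; first by case: u.
case Hs0: (s0 == [::]).
  move/eqP: Hs0 => -> Hsub.
  have := size_subseq Hsub; case: u Hsub => [//|x [|//]] Hsub _ _ _ /=.
  have := mem_subseq Hsub (mem_head x [::]); rewrite /= mem_seq1 => /eqP ->.
  by split.
move/negbT: Hs0 => Hs0.
move: Us; rewrite rcons_uniq => /andP[zs0 Us0].
have Hp : last 0 s0 != z by apply: contraNneq zs0 => <-; apply: last_in0.
rewrite chg_rcons // lastd_rcons // last_rcons.
have Hd := lastd_true s0.
case/subseqP=> m Hm ->.
have: m != [::] by rewrite -size_eq0 Hm size_rcons.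
case/lastP: m Hm => [//|m0 b] Hm _.
have Hm0 : size m0 = size s0 by move: Hm; rewrite !size_rcons => -[].
rewrite mask_rcons //; clear Hm; case: b.
- rewrite cats1 => Hne Halt.
  rewrite last_rcons size_rcons; split; last by case: (_ < _).
  case Hu0: (mask m0 s0 == [::]); first by move/eqP: Hu0 => ->.
  move: Halt; rewrite alt_rcons Hu0 /= => /andP[Halt Hc].
  have [Hb Heq] := IH Us0 _ (mask_subseq m0 s0) (negbT Hu0) Halt.
  rewrite ltnS; case: (ltngtP (size (mask m0 s0)) (chg true s0).+1) Hb => // Hlt _.
    by apply: leq_trans (leq_addr _ _).
  have := Heq Hlt; move: Hc; rewrite Hlt -Hd.
  case: (lastd true s0) => Hc Hr.
    have : z < last 0 s0 by apply: leq_trans Hr.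
    move=> Hz; have -> : (last 0 s0 < z) = false by rewrite ltnNge (ltnW Hz).
    by rewrite addn1.
  have : last 0 s0 < z by apply: leq_ltn_trans Hc.
  by move=> ->; rewrite addn1.
- rewrite /= cats0 => Hne Halt.
  have [Hb Heq] := IH Us0 _ (mask_subseq m0 s0) Hne Halt.
  split; first by apply: leq_trans Hb _; rewrite ltnS leq_addr.
  case Hx: (lastd true s0 != (last 0 s0 < z)) => /= Heq2.
    by move: Hb; rewrite Heq2 addn1 ltnn.
  move: Hx => /negbFE/eqP Hde.
  have Hs : size (mask m0 s0) = (chg true s0).+1 by rewrite Heq2 addn0.
  move: (Heq Hs); rewrite Hde.
  case: ltngtP Hp => //.
    by move=> Hlt _ Hle; apply: leq_trans Hle (ltnW Hlt).
  by move=> Hlt _ Hle; apply: leq_trans (ltnW Hlt) Hle.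
Qed.

Lemma alt_lower s : uniq s -> s != [::] -> exists u,
  [/\ subseq u s, alternating u, size u = (chg true s).+1 & last 0 u = last 0 s].
Proof.
elim/last_ind: s => [//|s0 z IH] Us _.
case Hs0: (s0 == [::]).
  move/eqP: Hs0 => ->; exists [:: z]; split => //.
  by apply/altP.
move/negbT: Hs0 => Hs0.
move: Us; rewrite rcons_uniq => /andP[zs0 Us0].
have Hp : last 0 s0 != z by apply: contraNneq zs0 => <-; apply: last_in0.
have [u [Hsub Halt Hsz Hlast]] := IH Us0 Hs0.
have Hd := lastd_true s0.
rewrite chg_rcons // last_rcons.
case Hx: (lastd true s0 != (last 0 s0 < z)).
  exists (rcons u z); split.
  - exact: rcons_subseq2.
  - rewrite alt_rcons Halt /= Hsz -Hd Hlast; apply/orP; right.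
    move: Hx; case: (lastd true s0) => /=; last by move/negbNE.
    by rewrite -leqNgt leq_eqVlt eq_sym (negbTE Hp).
  - by rewrite size_rcons Hsz addn1.
  - by rewrite last_rcons.
move: Hx => /negbFE/eqP Hde.
have : u != [::] by rewrite -size_eq0 Hsz.
case/lastP: u Hsub Halt Hsz Hlast => [//|u0 p] Hsub Halt Hsz Hlast _.
exists (rcons u0 z); split.
- apply: rcons_subseq2; apply: subseq_trans Hsub; exact: subseq_rcons.
- move: Halt; rewrite !alt_rcons => /andP[-> /=].
  move: Hsz Hlast; rewrite size_rcons last_rcons => Hsz ->.
  have : odd (size u0) = ~~ lastd true s0 by rewrite Hd -Hsz /=; case: (odd _).
  move=> ->; rewrite Hde.
  case: (u0 == [::]) => //=.
  case: ltngtP Hp => // Hlt _ /=.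
    by move=> H; apply: ltn_trans H Hlt.
  by move=> H; apply: ltn_trans Hlt H.
- by rewrite size_rcons addn0 -Hsz size_rcons.
- by rewrite last_rcons.
Qed.

Lemma alt_len_eq s : uniq s -> s != [::] -> alt_len s = (chg true s).+1.
Proof.
move=> Us Hs; apply/eqP; rewrite eqn_leq; apply/andP; split.
  apply/bigmax_leqP => m Hm.
  case Hu: (mask m s == [::]); first by move/eqP: Hu => ->.
  by have [] := alt_upper Us (mask_subseq m s) (negbT Hu) Hm.
have [u [Hsub Halt Hsz _]] := alt_lower Us Hs.
case/subseqP: Hsub => m Hm Hu.
have Hm' : size m == size s by rewrite Hm.
pose t := @Tuple (size s) bool m Hm'.
rewrite -Hsz Hu.
have := @leq_bigmax_cond _ (fun t : (size s).-tuple bool => alternating (mask t s))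
          (fun t : (size s).-tuple bool => size (mask t s)) t.
by rewrite /= -Hu => /(_ Halt).
Qed.

Lemma seqmax_ub s y : y \in s -> y <= seqmax s.
Proof.
elim: s => [//|x s IH]; rewrite inE /= => /orP[/eqP ->|/IH H].
  exact: leq_maxl.
by apply: leq_trans H (leq_maxr _ _).
Qed.

Lemma seqmax_in s : s != [::] -> seqmax s \in s.
Proof.
elim: s => [//|x s IH] _ /=.
case: s IH => [|y s] IH; first by rewrite /= maxn0 inE.
rewrite /maxn; case: ltnP => _; first by rewrite inE IH ?orbT.
by rewrite inE eqxx.
Qed.

Lemma foldr_minn_lb d s y : y \in s -> foldr minn d s <= y.
Proof.
elim: s => [//|x s IH]; rewrite inE /= => /orP[/eqP ->|/IH H].
  exact: geq_minl.
by apply: leq_trans (geq_minr _ _) H.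
Qed.

Lemma foldr_minn_in d s : foldr minn d s \in d :: s.
Proof.
elim: s => [|x s IH] /=; first by rewrite inE.
rewrite /minn; case: ltnP => _; first by rewrite !inE eqxx orbT.
by move: IH; rewrite !inE => /orP[->|->]; rewrite ?orbT.
Qed.

Lemma seqmin_lb s y : y \in s -> seqmin s <= y.
Proof. exact: foldr_minn_lb. Qed.

Lemma seqmin_in s : s != [::] -> seqmin s \in s.
Proof.
case: s => [//|x s] _; have := foldr_minn_in x (x :: s).
by rewrite /seqmin /= inE => /orP[/eqP ->|//]; rewrite inE eqxx.
Qed.

Lemma seqmax_eq s x : x \in s -> (forall y, y \in s -> y <= x) -> seqmax s = x.
Proof.
move=> xs H; apply/eqP; rewrite eqn_leq (seqmax_ub xs) andbT.
by apply: H; apply: seqmax_in; case: s xs.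
Qed.

Lemma seqmin_eq s x : x \in s -> (forall y, y \in s -> x <= y) -> seqmin s = x.
Proof.
move=> xs H; apply/eqP; rewrite eqn_leq (seqmin_lb xs) /=.
by apply: H; apply: seqmin_in; case: s xs.
Qed.

Lemma seqmax_eqi s1 s2 : s1 =i s2 -> seqmax s1 = seqmax s2.
Proof.
move=> E; case: s1 E => [|x s1] E.
  by case: s2 E => // y s2 E; have := E y; rewrite mem_head.
have Hs2 : s2 != [::].
  case: s2 E => // E; have := E x; rewrite mem_head in_nil; done.
apply: seqmax_eq; first by rewrite E seqmax_in.
by move=> y; rewrite E; apply: seqmax_ub.
Qed.

Lemma seqmin_eqi s1 s2 : s1 != [::] -> s1 =i s2 -> seqmin s1 = seqmin s2.
Proof.
move=> Hs E.
have Hs2 : s2 != [::].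
  case: s2 E => // E; have := E (seqmin s1); rewrite (seqmin_in Hs) in_nil; done.
apply: seqmin_eq; first by rewrite E seqmin_in.
by move=> y; rewrite E; apply: seqmin_lb.
Qed.

Definition monow (f : nat -> nat) (s : seq nat) :=
  {in s &, forall x y, (f x <= f y) = (x <= y)}.

Lemma monow_inj f s : monow f s -> {in s &, injective f}.
Proof.
move=> M x y xs ys E; apply/eqP; rewrite eqn_leq -(M x y) // -(M y x) // E leqnn //.
Qed.

Lemma monow_sub f s s' : {subset s' <= s} -> monow f s -> monow f s'.
Proof. by move=> S M x y xs ys; apply: M; apply: S. Qed.

Lemma mem_map_in f s s' x : monow f s -> {subset s' <= s} -> x \in s ->
  (f x \in map f s') = (x \in s').
Proof.
move=> M S xs; apply/mapP/idP => [[y ys E]|]; last by move=> H; exists x.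
by rewrite (monow_inj M xs (S _ ys) E).
Qed.

Lemma seqmax_map f s : monow f s -> s != [::] -> seqmax (map f s) = f (seqmax s).
Proof.
move=> M Hs; apply: seqmax_eq; first by apply: map_f; apply: seqmax_in.
move=> _ /mapP[y ys ->]; rewrite M ?seqmax_in //; exact: seqmax_ub.
Qed.

Lemma seqmin_map f s : monow f s -> s != [::] -> seqmin (map f s) = f (seqmin s).
Proof.
move=> M Hs; apply: seqmin_eq; first by apply: map_f; apply: seqmin_in.
move=> _ /mapP[y ys ->]; rewrite M ?seqmin_in //; exact: seqmin_lb.
Qed.

Lemma in_word_root l a r : a \in word (BNode l a r).
Proof. by rewrite /= mem_cat inE eqxx orbT. Qed.

Lemma word_nil_node l a r : word (BNode l a r) != [::].
Proof. by rewrite /=; case: (word l). Qed.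

Lemma is_min_nodeE l a r : is_min_node l a r = (a == seqmin (word (BNode l a r))).
Proof.
rewrite /is_min_node; apply/allP/eqP => [H|E]; last by move=> y Hy; rewrite {1}E; apply: seqmin_lb.
apply/eqP; rewrite eqn_leq seqmin_lb ?in_word_root // andbT.
by apply: H; apply: seqmin_in; apply: word_nil_node.
Qed.

Lemma is_max_nodeE l a r : is_max_node l a r = (a == seqmax (word (BNode l a r))).
Proof.
rewrite /is_max_node; apply/allP/eqP => [H|E]; last by move=> y Hy; rewrite {1}E; apply: seqmax_ub.
apply/eqP; rewrite eqn_leq seqmax_ub ?in_word_root //.
by apply: H; apply: seqmax_in; apply: word_nil_node.
Qed.

Lemma hr_node_okE l a r : hr_node_ok l a r =
  let s := word (BNode l a r) in
  (is_empty l && is_empty r) ||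
  [&& (a == seqmin s) || (a == seqmax s), ~~ is_empty r,
      (a == seqmin s) ==> (seqmax s \in word r) &
      (a == seqmax s) ==> (seqmin s \in word r)].
Proof. by rewrite /hr_node_ok is_min_nodeE is_max_nodeE. Qed.

Lemma word_relabel f t : word (relabel f t) = map f (word t).
Proof. by elim: t => //= l IHl a r IHr; rewrite IHl IHr map_cat. Qed.

Lemma is_empty_relabel f t : is_empty (relabel f t) = is_empty t.
Proof. by case: t. Qed.

Lemma nleaves_relabel f t : nleaves (relabel f t) = nleaves t.
Proof. by elim: t => //= l IHl a r IHr; rewrite !is_empty_relabel IHl IHr. Qed.

Lemma relabel_comp f g t : relabel f (relabel g t) = relabel (f \o g) t.
Proof. by elim: t => //= l -> a r ->. Qed.

Lemma eq_in_relabel f g t : {in word t, f =1 g} -> relabel f t = relabel g t.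
Proof.
elim: t => //= l IHl a r IHr H; rewrite IHl ?IHr ?H ?mem_cat ?inE ?eqxx ?orbT //.
  by move=> x xr; apply: H; rewrite mem_cat inE xr !orbT.
by move=> x xl; apply: H; rewrite mem_cat xl.
Qed.

Lemma is_min_node_relabel f l a r : monow f (word (BNode l a r)) ->
  is_min_node (relabel f l) (f a) (relabel f r) = is_min_node l a r.
Proof.
move=> M; rewrite !is_min_nodeE.
have -> : word (BNode (relabel f l) (f a) (relabel f r)) = map f (word (BNode l a r)).
  by rewrite /= !word_relabel map_cat.
rewrite seqmin_map ?word_nil_node //.
rewrite (inj_in_eq (monow_inj M)) ?in_word_root //.
by apply: seqmin_in; apply: word_nil_node.
Qed.

Lemma hr_node_ok_relabel f l a r : monow f (word (BNode l a r)) ->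
  hr_node_ok (relabel f l) (f a) (relabel f r) = hr_node_ok l a r.
Proof.
move=> M; rewrite !hr_node_okE /=.
have -> : word (relabel f l) ++ f a :: word (relabel f r) = map f (word (BNode l a r)).
  by rewrite /= !word_relabel map_cat.
have Hne := word_nil_node l a r.
have Ha := in_word_root l a r.
have Hr : {subset word r <= word (BNode l a r)}.
  by move=> x xr; rewrite /= mem_cat inE xr !orbT.
rewrite seqmin_map ?seqmax_map // !is_empty_relabel word_relabel.
rewrite !(inj_in_eq (monow_inj M)) ?seqmin_in ?seqmax_in //.
by rewrite !(mem_map_in M Hr) ?seqmin_in ?seqmax_in.
Qed.

Lemma all_nodes_relabel f t : monow f (word t) ->
  all_nodes hr_node_ok (relabel f t) = all_nodes hr_node_ok t.
Proof.
elim: t => //= l IHl a r IHr M.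
rewrite hr_node_ok_relabel // IHl ?IHr //.
  apply: monow_sub M => x xr; rewrite mem_cat inE xr !orbT //.
apply: monow_sub M => x xl; rewrite mem_cat xl //.
Qed.

Lemma is_HR_relabel f t : monow f (word t) -> is_HR (relabel f t) = is_HR t.
Proof.
move=> M; rewrite /is_HR all_nodes_relabel // word_relabel.
by rewrite (map_inj_in_uniq (monow_inj M)).
Qed.

Fixpoint tlast (e : bool) (t : btree) : bool :=
  match t with
  | BEmpty => e
  | BNode l a r => if is_empty r then e else tlast (is_min_node l a r) r
  end.

Fixpoint tcnt (e : bool) (t : btree) : nat :=
  match t with
  | BEmpty => 0
  | BNode l a r => if is_empty r then 0 else
      (if is_empty l then nat_of_bool (e != is_min_node l a r)
       else tcnt e l + (tlast e l != ~~ is_min_node l a r) + 1)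
      + tcnt (is_min_node l a r) r
  end.

Lemma HR_node l a r : is_HR (BNode l a r) ->
  [/\ uniq (word (BNode l a r)), hr_node_ok l a r, is_HR l & is_HR r].
Proof.
rewrite /is_HR /= => /andP[U /and3P[Hn Hl Hr]]; split => //.
  by rewrite Hl (subseq_uniq _ U) // prefix_subseq.
rewrite Hr andbT; apply: subseq_uniq U.
by apply: (subseq_trans _ (suffix_subseq (word l) _)); apply: subseq_cons.
Qed.

Lemma word_ne t : ~~ is_empty t -> word t != [::].
Proof. by case: t => // l a r _; apply: word_nil_node. Qed.

Lemma HR_leaf l a r : hr_node_ok l a r -> is_empty r -> is_empty l.
Proof. by rewrite /hr_node_ok => /orP[/andP[]//|/and4P[_ Hr _ _] Er]; rewrite Er in Hr. Qed.

Lemma node_dirs l a r : uniq (word (BNode l a r)) -> hr_node_ok l a r ->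
  ~~ is_empty r ->
  (a < head 0 (word r)) = is_min_node l a r /\
  (~~ is_empty l -> (last 0 (word l) < a) = ~~ is_min_node l a r).
Proof.
move=> U H Hr; move: H; rewrite hr_node_okE /= (negbTE Hr) andbF /=.
case/and3P => Hmm _ _.
rewrite is_min_nodeE /=.
set w := word l ++ a :: word r.
move: U; rewrite /= cat_uniq => /and3P[_ Hh /andP[Har _]].
have Hal : a \notin word l by move: Hh; rewrite /= negb_or => /andP[].
have Hwr : word r != [::] by apply: word_ne.
have hin : head 0 (word r) \in word r by case: (word r) Hwr => // x s _; rewrite mem_head.
have hw : head 0 (word r) \in w by rewrite mem_cat inE hin !orbT.
have Hah : a != head 0 (word r) by apply: contraNneq Har => ->.
case/orP: Hmm => /eqP Ha.
  rewrite Ha eqxx; split.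
    by rewrite ltn_neqAle -Ha Hah /= Ha seqmin_lb.
  move=> Hl; have lin : last 0 (word l) \in word l by apply: last_in0; apply: word_ne.
  have lw : last 0 (word l) \in w by rewrite mem_cat lin.
  have Hal' : last 0 (word l) != a.
    by apply: contraNneq Hal => <-; rewrite lin.
  by rewrite ltnNge (seqmin_lb lw).
have Hne : (a == seqmin w) = false.
  apply/negbTE; apply/eqP => E.
  have : seqmin w <= head 0 (word r) by apply: seqmin_lb.
  have : head 0 (word r) <= seqmax w by apply: seqmax_ub.
  rewrite -E -Ha => H1 H2.
  by move: Hah; rewrite eqn_leq H1 H2.
rewrite Hne; split.
  by rewrite ltnNge Ha seqmax_ub.
move=> Hl; have lin : last 0 (word l) \in word l by apply: last_in0; apply: word_ne.
have lw : last 0 (word l) \in w by rewrite mem_cat lin.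
have Hal' : last 0 (word l) != a.
  by apply: contraNneq Hal => <-; rewrite lin.
by rewrite ltn_neqAle Hal' Ha seqmax_ub.
Qed.

Lemma word_chg t e : is_HR t -> ~~ is_empty t ->
  chg e (word t) = tcnt e t /\ lastd e (word t) = tlast e t.
Proof.
elim: t e => [//|l IHl a r IHr] e /HR_node[U Hn Hl Hr] _.
case Er: (is_empty r).
  have El := HR_leaf Hn Er.
  by case: l El {IHl U Hn Hl} => // _; case: r Er {IHr Hr} => //.
have [Hh Hlast] := node_dirs U Hn (negbT Er).
have Hwr := word_ne (negbT Er).
have [IHr1 IHr2] := IHr (is_min_node l a r) Hr (negbT Er).
rewrite /=  Er.
case El: (is_empty l).
  case: l El Hh Hlast IHr1 IHr2 {IHl Hl U Hn} => // _ Hh _ IHr1 IHr2.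
  by rewrite cat0s chg_cons // lastd_cons // Hh IHr1 IHr2.
have Hwl := word_ne (negbT El).
have [IHl1 IHl2] := IHl e Hl (negbT El).
rewrite chg_cat // lastd_cat // chg_cons // lastd_cons //.
rewrite [head 0 (a :: _)]/=.
rewrite Hh (Hlast (negbT El)) IHl1 IHl2 IHr1 IHr2; split => //.
by rewrite -!addnA; congr (_ + (_ + _)); case: (is_min_node l a r).
Qed.

Lemma tcnt_lb e t : all_nodes hr_node_ok t -> nleaves t <= (tcnt e t).+1.
Proof.
elim: t e => [//|l IHl a r IHr] e /= /and3P[Hn Hl Hr].
case Er: (is_empty r); first by rewrite (HR_leaf Hn Er).
rewrite andbF.
have := IHr (is_min_node l a r) Hr.
case El: (is_empty l).
  by case: l El {IHl Hl Hn} => // _ /=; lia.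
have := IHl e Hl; lia.
Qed.

Lemma tlast_relabel f e t : monow f (word t) -> tlast e (relabel f t) = tlast e t.
Proof.
elim: t e => //= l IHl a r IHr e M.
rewrite is_empty_relabel is_min_node_relabel // IHr //.
by apply: monow_sub M => x xr; rewrite mem_cat inE xr !orbT.
Qed.

Lemma tcnt_relabel f e t : monow f (word t) -> tcnt e (relabel f t) = tcnt e t.
Proof.
elim: t e => //= l IHl a r IHr e M.
have Ml : monow f (word l) by apply: monow_sub M => x xl; rewrite mem_cat xl.
have Mr : monow f (word r) by apply: monow_sub M => x xr; rewrite mem_cat inE xr !orbT.
by rewrite !is_empty_relabel is_min_node_relabel // IHr // IHl // tlast_relabel.
Qed.

Lemma perm_rem2 (x : nat) s1 s2 : perm_eq s1 s2 -> perm_eq (rem x s1) (rem x s2).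
Proof.
move=> P; apply/permP => q; rewrite !count_rem (permP P) (perm_mem P) //.
Qed.

Lemma sorted_nth_mono s i j : sorted ltn s -> i < size s -> j < size s ->
  (nth 0 s i <= nth 0 s j) = (i <= j).
Proof.
move=> S Hi Hj; case: (leqP i j) => H.
  have Sl : sorted leq s by move: S; rewrite ltn_sorted_uniq_leq => /andP[].
  by apply: (sorted_leq_nth leq_trans leqnn 0 Sl).
apply/negbTE; rewrite -ltnNge.
by apply: (sorted_ltn_nth ltn_trans 0 S).
Qed.

Lemma sorted_index_mono s x y : sorted ltn s -> x \in s -> y \in s ->
  (index x s <= index y s) = (x <= y).
Proof.
move=> S xs ys; rewrite -[x in RHS](nth_index 0 xs) -[y in RHS](nth_index 0 ys).
by rewrite sorted_nth_mono ?index_mem.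
Qed.

Lemma sort_ltn s : uniq s -> sorted ltn (sort leq s).
Proof. by move=> U; rewrite ltn_sorted_uniq_leq sort_uniq U sort_sorted //; exact: leq_total. Qed.

Definition gmap (rest old : seq nat) (y : nat) := nth 0 rest (index y old).

Lemma gmap_mono rest old : sorted ltn rest -> sorted ltn old -> size rest = size old ->
  monow (gmap rest old) old.
Proof.
move=> Sr So Hs x y xo yo; rewrite /gmap sorted_nth_mono ?Hs ?index_mem //.
exact: sorted_index_mono.
Qed.

Lemma gmap_map rest old : uniq old -> size rest = size old -> map (gmap rest old) old = rest.
Proof.
move=> U Hs; rewrite -[X in map _ X](mkseq_nth 0 old) /mkseq -map_comp.
rewrite -[RHS](mkseq_nth 0 rest) /mkseq Hs; apply/eq_in_map => i.
rewrite mem_iota add0n => Hi; rewrite /= /gmap index_uniq //.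
Qed.

Lemma gmap_inv rest old y : uniq rest -> size rest = size old -> y \in old ->
  gmap old rest (gmap rest old y) = y.
Proof.
move=> U Hs yo; rewrite /gmap index_uniq ?nth_index // Hs index_mem //.
Qed.

Definition hr_new l a r :=
  if is_min_node l a r then seqmax (a :: word r) else seqmin (a :: word r).
Definition hr_rest l a r := sort leq (rem (hr_new l a r) (a :: word r)).
Definition hr_g l a r := gmap (hr_rest l a r) (sort leq (word r)).

Lemma hr_actE l a r : hr_act l a r =
  if is_empty l && is_empty r then BNode l a r
  else BNode l (hr_new l a r) (relabel (hr_g l a r) r).
Proof. by []. Qed.

Lemma relabel_id t : relabel id t = t.
Proof. by elim: t => //= l -> a r ->. Qed.

Lemma hr_info l a r : uniq (word (BNode l a r)) -> hr_node_ok l a r -> ~~ is_empty r ->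
  [/\ a \notin word r, seqmin (word (BNode l a r)) != seqmax (word (BNode l a r)),
      is_min_node l a r -> a = seqmin (word (BNode l a r)) /\
                           seqmax (word (BNode l a r)) \in word r &
      ~~ is_min_node l a r -> a = seqmax (word (BNode l a r)) /\
                           seqmin (word (BNode l a r)) \in word r].
Proof.
move=> U Hn Hr.
have Har : a \notin word r.
  by move: U; rewrite /= cat_uniq => /and3P[_ _ /andP[]].
move: Hn; rewrite hr_node_okE /= (negbTE Hr) andbF /= => /and3P[Hmm H1 H2].
rewrite is_min_nodeE /=.
set w := word l ++ a :: word r.
split => //.
- apply/eqP => E; case/orP: Hmm => /eqP Ha.
    have : seqmax w \in word r by move: H1; rewrite -Ha eqxx.
    by rewrite -E -Ha (negbTE Har).
  have : seqmin w \in word r by move: H2; rewrite -Ha eqxx.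
  by rewrite E -Ha (negbTE Har).
- by move=> /eqP Ha; split; [|move: H1; rewrite -Ha eqxx].
- move=> Hne; case/orP: Hmm => /eqP Ha; first by rewrite Ha eqxx in Hne.
  by split; [|move: H2; rewrite -Ha eqxx].
Qed.

Lemma hr_act_inner l a r : ~~ is_empty r ->
  hr_act l a r = BNode l (hr_new l a r) (relabel (hr_g l a r) r).
Proof. by rewrite hr_actE => /negbTE ->; rewrite andbF. Qed.

Lemma sub_R l a r : {subset a :: word r <= word (BNode l a r)}.
Proof. by move=> y; rewrite inE /= mem_cat inE => /orP[->|->]; rewrite ?orbT. Qed.

Lemma hr_new_in l a r : hr_new l a r \in a :: word r.
Proof. by rewrite /hr_new; case: ifP => _; [apply: seqmax_in | apply: seqmin_in]. Qed.

Lemma size_hr_rest l a r : size (hr_rest l a r) = size (word r).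
Proof. by rewrite /hr_rest size_sort size_rem ?hr_new_in. Qed.

Definition inner_ok l a r := [&& uniq (word (BNode l a r)), hr_node_ok l a r & ~~ is_empty r].

Lemma hr_newE l a r : inner_ok l a r ->
  hr_new l a r = if is_min_node l a r then seqmax (word (BNode l a r))
                 else seqmin (word (BNode l a r)).
Proof.
case/and3P => U Hn Hr; have [Har Hlh Hm Hnm] := hr_info U Hn Hr.
rewrite /hr_new; case: ifP => m.
  have [Ha Hhi] := Hm m.
  apply: seqmax_eq; first by rewrite inE Hhi orbT.
  by move=> y /(sub_R l); apply: seqmax_ub.
have [Ha Hlo] := Hnm (negbT m).
apply: seqmin_eq; first by rewrite inE Hlo orbT.
by move=> y /(sub_R l); apply: seqmin_lb.
Qed.

Lemma hr_new_inr l a r : inner_ok l a r -> hr_new l a r \in word r.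
Proof.
move=> I; rewrite hr_newE //; move: I => /and3P[U Hn Hr].
have [Har Hlh Hm Hnm] := hr_info U Hn Hr.
by case: ifP => m; [case: (Hm m) | case: (Hnm (negbT m))].
Qed.

Lemma uniq_R l a r : uniq (word (BNode l a r)) -> uniq (a :: word r).
Proof. by rewrite /= cat_uniq => /and3P[]. Qed.

Lemma hr_perm1 l a r : perm_eq (hr_new l a r :: hr_rest l a r) (a :: word r).
Proof.
rewrite /hr_rest (permPr (perm_to_rem (hr_new_in l a r))).
by rewrite perm_cons perm_sort.
Qed.

Lemma hr_rest_sorted l a r : uniq (word (BNode l a r)) -> sorted ltn (hr_rest l a r).
Proof. by move=> U; apply: sort_ltn; apply: rem_uniq; apply: uniq_R U. Qed.

Lemma old_sorted l a r : uniq (word (BNode l a r)) -> sorted ltn (sort leq (word r)).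
Proof. by move=> U; apply: sort_ltn; case/andP: (uniq_R U). Qed.

Lemma a_in_rest l a r : inner_ok l a r -> a \in hr_rest l a r.
Proof.
move=> I; have Hin := hr_new_inr I; move: I => /and3P[U Hn Hr].
have [Har _ _ _] := hr_info U Hn Hr.
rewrite /hr_rest mem_sort rem_mem ?mem_head //.
by apply: contraNneq Har => ->.
Qed.

Lemma hr_g_mono l a r : uniq (word (BNode l a r)) -> monow (hr_g l a r) (word r).
Proof.
move=> U; apply: (@monow_sub _ (sort leq (word r))).
  by move=> x Hx; rewrite mem_sort; exact: Hx.
have Hs : size (hr_rest l a r) = size (sort leq (word r)) by rewrite size_hr_rest size_sort.
exact: (gmap_mono (hr_rest_sorted U) (old_sorted U) Hs).
Qed.

Lemma hr_g_perm l a r : uniq (word (BNode l a r)) ->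
  perm_eq (map (hr_g l a r) (word r)) (hr_rest l a r).
Proof.
move=> U; rewrite -[X in perm_eq _ X](@gmap_map (hr_rest l a r) (sort leq (word r))).
- by apply: perm_map; rewrite perm_sym perm_sort.
- by rewrite sort_uniq; case/andP: (uniq_R U).
- by rewrite size_hr_rest size_sort.
Qed.

Lemma hr_perm l a r : inner_ok l a r ->
  perm_eq (word (hr_act l a r)) (word (BNode l a r)).
Proof.
move=> I; move: (I) => /and3P[U Hn Hr].
rewrite hr_act_inner //= word_relabel perm_cat2l.
rewrite -(permPr (hr_perm1 l a r)).
by rewrite perm_cons; apply: hr_g_perm.
Qed.

Lemma hr_type l a r : inner_ok l a r ->
  is_min_node l (hr_new l a r) (relabel (hr_g l a r) r) = ~~ is_min_node l a r.
Proof.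
move=> I; have P := hr_perm I; rewrite hr_act_inner in P; last by case/and3P: I.
rewrite is_min_nodeE (seqmin_eqi (word_nil_node _ _ _) (perm_mem P)) hr_newE //.
move: I => /and3P[U Hn Hr]; have [Har Hlh Hm Hnm] := hr_info U Hn Hr.
case: ifP => m; last by rewrite eqxx.
by rewrite eq_sym (negbTE Hlh).
Qed.

Lemma HR_hr_act l a r : is_HR (BNode l a r) -> is_HR (hr_act l a r).
Proof.
move=> H; have [U Hn Hl Hr] := HR_node H.
case Er: (is_empty r); first by rewrite hr_actE (HR_leaf Hn Er) Er.
have I : inner_ok l a r by rewrite /inner_ok U Hn Er.
have P := hr_perm I.
rewrite /is_HR (perm_uniq P) U /=.
rewrite hr_act_inner ?Er //=.
move: Hl Hr => /andP[_ ->] /andP[_ Hr].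
rewrite all_nodes_relabel; last exact: hr_g_mono U.
rewrite Hr !andbT.
rewrite hr_act_inner ?Er // in P.
have E1 := seqmin_eqi (word_nil_node _ _ _) (perm_mem P).
have E2 := seqmax_eqi (perm_mem P).
rewrite hr_node_okE /= in E1 E2 *.
rewrite E1 E2 !is_empty_relabel Er andbF /=.
have Hmem : forall x, (x \in word (relabel (hr_g l a r) r)) = (x \in hr_rest l a r).
  by move=> x; rewrite word_relabel (perm_mem (hr_g_perm U)).
rewrite !Hmem hr_newE //=.
have [Har Hlh Hm Hnm] := hr_info U Hn (negbT Er).
have Hr' := a_in_rest I.
case: ifP => m.
  have [Ha _] := Hm m.
  by rewrite eqxx orbT /= eq_sym (negbTE Hlh) /= -Ha Hr'.
have [Ha _] := Hnm (negbT m).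
by rewrite eqxx /= (negbTE Hlh) /= -Ha Hr'.
Qed.

Lemma hr_act_invol l a r : inner_ok l a r ->
  hr_act l (hr_new l a r) (relabel (hr_g l a r) r) = BNode l a r.
Proof.
move=> I; move: (I) => /and3P[U Hn Hr].
have [Har Hlh Hm Hnm] := hr_info U Hn Hr.
rewrite hr_act_inner ?is_empty_relabel //.
have PR : perm_eq (hr_new l a r :: word (relabel (hr_g l a r) r)) (a :: word r).
  rewrite -(permPr (hr_perm1 l a r)) word_relabel perm_cons.
  exact: hr_g_perm.
have Hnew2 : hr_new l (hr_new l a r) (relabel (hr_g l a r) r) = a.
  rewrite {1}/hr_new (hr_type I).
  case: ifP => m.
    rewrite (seqmax_eqi (perm_mem PR)).
    have [Ha _] := Hnm m.
    apply: seqmax_eq; first exact: mem_head.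
    by move=> y /(sub_R l) Hy; rewrite Ha; apply: seqmax_ub.
  rewrite (seqmin_eqi _ (perm_mem PR)) //.
  have [Ha _] := Hm (negbFE m).
  apply: seqmin_eq; first exact: mem_head.
  by move=> y /(sub_R l) Hy; rewrite Ha; apply: seqmin_lb.
rewrite Hnew2; congr BNode.
have Hr1 : hr_rest l (hr_new l a r) (relabel (hr_g l a r) r) = sort leq (word r).
  rewrite /hr_rest Hnew2; apply/perm_sortP; [exact: leq_total|exact: leq_trans|exact: anti_leq|].
  have := perm_rem2 a PR; rewrite [rem a (a :: _)]rem_cons eqxx; apply.
have Hr2 : sort leq (word (relabel (hr_g l a r) r)) = hr_rest l a r.
  rewrite -[RHS](@sorted_sort _ leq leq_trans); last by apply: sort_sorted; exact: leq_total.
  apply/perm_sortP; [exact: leq_total|exact: leq_trans|exact: anti_leq|].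
  by rewrite word_relabel; apply: hr_g_perm.
rewrite relabel_comp /hr_g Hr1 Hr2 -[RHS]relabel_id; apply: eq_in_relabel => y yr /=.
apply: gmap_inv; last by rewrite mem_sort.
  by have := hr_rest_sorted U; rewrite ltn_sorted_uniq_leq => /andP[].
by rewrite size_hr_rest size_sort.
Qed.

Lemma rem_map_in (f : nat -> nat) (s : seq nat) (x : nat) : {in s &, injective f} -> x \in s ->
  rem (f x) (map f s) = map f (rem x s).
Proof.
elim: s => [//|z s IH] Hi xs.
rewrite [map f (z :: s)]/= !rem_cons (inj_in_eq Hi) ?mem_head //.
case: eqP => // Hzx /=; congr cons; apply: IH.
  by move=> u v us vs; apply: Hi; rewrite inE ?us ?vs orbT.
by move: xs; rewrite inE => /orP[/eqP E|//]; case: Hzx.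
Qed.

Lemma index_map_in (f : nat -> nat) (s : seq nat) (x : nat) : {in s &, injective f} -> x \in s ->
  index (f x) (map f s) = index x s.
Proof.
elim: s => [//|z s IH] Hi xs /=.
rewrite (inj_in_eq Hi) ?mem_head //.
case: eqP => // Hzx; congr S; apply: IH.
  by move=> u v us vs; apply: Hi; rewrite inE ?us ?vs orbT.
by move: xs; rewrite inE => /orP[/eqP E|//]; case: Hzx.
Qed.

Lemma sort_map_mono f s : monow f s -> sort leq (map f s) = map f (sort leq s).
Proof.
move=> M; apply: (sorted_eq leq_trans anti_leq).
- by apply: sort_sorted; exact: leq_total.
- apply: (@homo_sorted_in _ _ (fun x => x \in s) f leq leq).
  + by move=> x y xs ys; rewrite M.
  + by apply/allP => x Hx; rewrite mem_sort in Hx; exact: Hx.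
  + by apply: sort_sorted; exact: leq_total.
- by rewrite perm_sort; apply: perm_map; rewrite perm_sym perm_sort.
Qed.

Lemma hr_act_relabel f l a r : monow f (word (BNode l a r)) ->
  hr_act (relabel f l) (f a) (relabel f r) = relabel f (hr_act l a r).
Proof.
move=> M; rewrite !hr_actE !is_empty_relabel.
case: ifP => //= _.
have MR : monow f (a :: word r) by apply: monow_sub M; apply: sub_R.
have Hnew : hr_new (relabel f l) (f a) (relabel f r) = f (hr_new l a r).
  rewrite /hr_new is_min_node_relabel // word_relabel.
  have -> : f a :: map f (word r) = map f (a :: word r) by [].
  by case: ifP => _; [apply: seqmax_map|apply: seqmin_map].
rewrite Hnew; congr BNode; rewrite !relabel_comp; apply: eq_in_relabel => y yr /=.
have Hi := monow_inj MR.
have Hrest : hr_rest (relabel f l) (f a) (relabel f r) = map f (hr_rest l a r).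
  rewrite /hr_rest Hnew word_relabel.
  have -> : f a :: map f (word r) = map f (a :: word r) by [].
  rewrite rem_map_in ?hr_new_in //; apply: sort_map_mono.
  by apply: monow_sub MR; apply: mem_rem.
have Mr : monow f (word r) by apply: monow_sub MR => z zr; rewrite inE zr orbT.
rewrite /hr_g Hrest word_relabel sort_map_mono // /gmap.
rewrite index_map_in ?mem_sort //; last first.
  by move=> u v; rewrite !mem_sort; apply: (monow_inj Mr).
rewrite (nth_map 0) // size_hr_rest -(size_sort leq) index_mem mem_sort //.
Qed.

Lemma hr_perm_inv l1 l2 a r1 r2 : perm_eq (word l1) (word l2) -> perm_eq (word r1) (word r2) ->
  hr_new l1 a r1 = hr_new l2 a r2 /\ hr_g l1 a r1 = hr_g l2 a r2.
Proof.
move=> P1 P2.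
have Pw : perm_eq (word (BNode l1 a r1)) (word (BNode l2 a r2)).
  by rewrite /=; apply: perm_cat => //; rewrite perm_cons.
have PR : perm_eq (a :: word r1) (a :: word r2) by rewrite perm_cons.
have Hm : is_min_node l1 a r1 = is_min_node l2 a r2 by rewrite /is_min_node (perm_all _ Pw).
have Hn : hr_new l1 a r1 = hr_new l2 a r2.
  rewrite /hr_new Hm (seqmax_eqi (perm_mem PR)) (seqmin_eqi _ (perm_mem PR)) //.
split => //; rewrite /hr_g /hr_rest Hn.
have -> : sort leq (word r1) = sort leq (word r2).
  by apply/perm_sortP => //; [exact: leq_total|exact: leq_trans|exact: anti_leq].
have -> : sort leq (rem (hr_new l2 a r2) (a :: word r1)) = sort leq (rem (hr_new l2 a r2) (a :: word r2)).
  apply/perm_sortP => //; [exact: leq_total|exact: leq_trans|exact: anti_leq|].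
  exact: perm_rem2.
by [].
Qed.

Lemma hr_act_size l a r : size (word (hr_act l a r)) = size (word (BNode l a r)).
Proof. by rewrite hr_actE; case: ifP => //= _; rewrite !size_cat /= word_relabel size_map. Qed.

Lemma hr_act_nleaves l a r : nleaves (hr_act l a r) = nleaves (BNode l a r).
Proof. by rewrite hr_actE; case: ifP => //= _; rewrite is_empty_relabel nleaves_relabel. Qed.

Lemma hr_act_empty l a r : is_empty (hr_act l a r) = false.
Proof. by rewrite hr_actE; case: ifP. Qed.

Lemma hr_act_perm_HR l a r : is_HR (BNode l a r) ->
  perm_eq (word (hr_act l a r)) (word (BNode l a r)).
Proof.
move=> H; have [U Hn Hl Hr] := HR_node H.
case Er: (is_empty r); first by rewrite hr_actE (HR_leaf Hn Er) Er.
by apply: hr_perm; rewrite /inner_ok U Hn Er.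
Qed.

Lemma psi_size i t : size (word (psi i t)) = size (word t).
Proof.
elim: t i => //= l IHl a r IHr i.
case: ifP => _; first by rewrite /= !size_cat IHl.
case: ifP => _; first by rewrite hr_act_size.
by rewrite /= !size_cat /= IHr.
Qed.

Lemma psi_empty i t : is_empty (psi i t) = is_empty t.
Proof. by case: t => //= l a r; case: ifP => _ //; case: ifP => _ //; exact: hr_act_empty. Qed.

Lemma psi_nleaves i t : nleaves (psi i t) = nleaves t.
Proof.
elim: t i => //= l IHl a r IHr i.
have El : forall j, is_empty (psi j l) = is_empty l by move=> j; apply: psi_empty.
have Er : forall j, is_empty (psi j r) = is_empty r by move=> j; apply: psi_empty.
case: ifP => _; first by rewrite /= El IHl.
case: ifP => _; first by rewrite hr_act_nleaves.
by rewrite /= Er IHr.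
Qed.


Lemma psi_relabel f i t : monow f (word t) -> psi i (relabel f t) = relabel f (psi i t).
Proof.
elim: t i => //= l IHl a r IHr i M.
have Ml : monow f (word l) by apply: monow_sub M => x xl; rewrite mem_cat xl.
have Mr : monow f (word r) by apply: monow_sub M => x xr; rewrite mem_cat inE xr !orbT.
rewrite word_relabel size_map.
case: ifP => _; first by rewrite /= IHl.
case: ifP => _; first by apply: hr_act_relabel.
by rewrite /= IHr.
Qed.

Lemma node_ok_perm l1 l2 a r1 r2 : perm_eq (word l1) (word l2) ->
  perm_eq (word r1) (word r2) -> is_empty l1 = is_empty l2 -> is_empty r1 = is_empty r2 ->
  hr_node_ok l1 a r1 = hr_node_ok l2 a r2.
Proof.
move=> P1 P2 E1 E2.
have Pw : perm_eq (word (BNode l1 a r1)) (word (BNode l2 a r2)).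
  by rewrite /=; apply: perm_cat => //; rewrite perm_cons.
rewrite !hr_node_okE /= -/(word (BNode l1 a r1)) -/(word (BNode l2 a r2)).
rewrite (seqmax_eqi (perm_mem Pw)) (seqmin_eqi (word_nil_node _ _ _) (perm_mem Pw)).
by rewrite E1 E2 !(perm_mem P2).
Qed.

Lemma psi_perm_HR i t : is_HR t -> perm_eq (word (psi i t)) (word t) /\ is_HR (psi i t).
Proof.
elim: t i => [//|l IHl a r IHr] i H /=.
have [U Hn Hl Hr] := HR_node H.
case: ifP => _.
  have [P1 H1] := IHl i Hl.
  have Pw : perm_eq (word (BNode (psi i l) a r)) (word (BNode l a r)).
    by rewrite /=; apply: perm_cat => //; rewrite perm_cons.
  split => //; rewrite /is_HR (perm_uniq Pw) U /=.
  rewrite (node_ok_perm _ P1 (perm_refl _)) ?psi_empty //.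
  by move: H1 Hr => /andP[_ ->] /andP[_ ->]; rewrite Hn.
case: ifP => _; first by split; [apply: hr_act_perm_HR|apply: HR_hr_act].
have [P1 H1] := IHr (i - (size (word l)).+1) Hr.
have Pw : perm_eq (word (BNode l a (psi (i - (size (word l)).+1) r))) (word (BNode l a r)).
  by rewrite /=; apply: perm_cat => //; rewrite perm_cons.
split => //; rewrite /is_HR (perm_uniq Pw) U /=.
rewrite (node_ok_perm _ (perm_refl _) P1) ?psi_empty //.
by move: H1 Hl => /andP[_ ->] /andP[_ ->]; rewrite Hn.
Qed.

Inductive orbR : btree -> btree -> Prop :=
| oE : orbR BEmpty BEmpty
| oN l a r l' r' (f : bool) : orbR l l' -> orbR r r' ->
    orbR (BNode l a r) (if f then hr_act l' a r' else BNode l' a r').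

Lemma orbR_refl t : orbR t t.
Proof. elim: t => [|l IHl a r IHr]; [exact: oE | exact: (oN a false IHl IHr)]. Qed.

Lemma orbR_props t t' : orbR t t' -> is_HR t ->
  [/\ perm_eq (word t') (word t), is_HR t', nleaves t' = nleaves t & is_empty t' = is_empty t].
Proof.
elim=> [//|l a r l' r' f Hl IHl Hr IHr] H.
have [U Hn HRl HRr] := HR_node H.
have [P1 H1 N1 E1] := IHl HRl.
have [P2 H2 N2 E2] := IHr HRr.
have Pw : perm_eq (word (BNode l' a r')) (word (BNode l a r)).
  by rewrite /=; apply: perm_cat => //; rewrite perm_cons.
have HN : is_HR (BNode l' a r').
  rewrite /is_HR (perm_uniq Pw) U /= (node_ok_perm a P1 P2) // Hn.
  by move: H1 H2 => /andP[_ ->] /andP[_ ->].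
have NN : nleaves (BNode l' a r') = nleaves (BNode l a r) by rewrite /= E1 E2 N1 N2.
case: f.
  split; [|exact: HR_hr_act| |exact: hr_act_empty].
    exact: perm_trans (hr_act_perm_HR HN) Pw.
  by rewrite hr_act_nleaves.
by [].
Qed.

Lemma orbR_psi t t' i : orbR t t' -> is_HR t -> orbR t (psi i t').
Proof.
move=> Ho; elim: Ho i => [|l a r l' r' f Hl IHl Hr IHr] i H; first exact: oE.
have [U Hn HRl HRr] := HR_node H.
have [P1 H1 N1 E1] := orbR_props Hl HRl.
have [P2 H2 N2 E2] := orbR_props Hr HRr.
have Pw : perm_eq (word (BNode l' a r')) (word (BNode l a r)).
  by rewrite /=; apply: perm_cat => //; rewrite perm_cons.
have HN : is_HR (BNode l' a r').
  rewrite /is_HR (perm_uniq Pw) U /= (node_ok_perm a P1 P2) // Hn.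
  by move: H1 H2 => /andP[_ ->] /andP[_ ->].
have [U' Hn' _ _] := HR_node HN.
case: f.
  case Er: (is_empty r').
    have El := HR_leaf Hn' Er.
    have -> : psi i (hr_act l' a r') = hr_act l' a r'.
      rewrite hr_actE El Er /=.
      case: (l') El => // _; case: (r') Er => // _ /=.
      by case: ifP => //= _; rewrite hr_actE.
    exact: (oN a true Hl Hr).
  have I : inner_ok l' a r' by rewrite /inner_ok U' Hn' Er.
  rewrite hr_act_inner ?Er //=.
  case: ifP => Hi.
    have [P3 _] := psi_perm_HR i H1.
    have [<- <-] := hr_perm_inv a P3 (perm_refl (word r')).
    rewrite -hr_act_inner ?Er //.
    exact: (oN a true (IHl i HRl) Hr).
  case: ifP => Hi2; first by rewrite hr_act_invol //; exact: (oN a false Hl Hr).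
  set j := i - (size (word l')).+1.
  have [P3 _] := psi_perm_HR j H2.
  rewrite psi_relabel; last exact: hr_g_mono U'.
  have [<- <-] := hr_perm_inv a (perm_refl (word l')) P3.
  rewrite -hr_act_inner ?psi_empty ?Er //.
  exact: (oN a true Hl (IHr j HRr)).
rewrite /=.
case: ifP => Hi; first exact: (oN a false (IHl i HRl) Hr).
case: ifP => Hi2; first exact: (oN a true Hl Hr).
exact: (oN a false Hl (IHr _ HRr)).
Qed.

Lemma in_orb_orbR t t' : in_orb t t' -> is_HR t -> orbR t t'.
Proof.
elim=> [|t'' i _ IH _] H; first exact: orbR_refl.
exact: orbR_psi (IH H) H.
Qed.

Lemma in_orb_trans t1 t2 t3 : in_orb t1 t2 -> in_orb t2 t3 -> in_orb t1 t3.
Proof. by move=> H12; elim=> [//|t' i _ IH Hi]; apply: orb_step. Qed.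

Lemma in_orb_left l l' a r : in_orb l l' -> in_orb (BNode l a r) (BNode l' a r).
Proof.
elim=> [|l'' i _ IH Hi]; first exact: orb_refl.
have -> : BNode (psi i l'') a r = psi i (BNode l'' a r) by rewrite /= Hi.
apply: orb_step IH _; rewrite /= size_cat.
exact: leq_trans Hi (leq_addr _ _).
Qed.

Lemma in_orb_right l a r r' : in_orb r r' -> in_orb (BNode l a r) (BNode l a r').
Proof.
elim=> [|r'' i _ IH Hi]; first exact: orb_refl.
have -> : BNode l a (psi i r'') = psi (i + (size (word l)).+1) (BNode l a r'').
  have Hk : size (word l) < i + (size (word l)).+1 by rewrite addnS ltnS leq_addl.
  by rewrite /= ltnNge (ltnW Hk) /= gtn_eqF // addnK.
apply: orb_step IH _; rewrite /= size_cat /=; lia.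
Qed.

Lemma in_orb_root l a r : in_orb (BNode l a r) (hr_act l a r).
Proof.
have -> : hr_act l a r = psi (size (word l)) (BNode l a r) by rewrite /= ltnn eqxx.
apply: orb_step (orb_refl _) _; rewrite /= size_cat /=; lia.
Qed.

Definition TN e l m r :=
  (if is_empty l then nat_of_bool (e != m) else tcnt e l + (tlast e l != ~~ m) + 1) + tcnt m r.

Lemma tcnt_flip e l a r (f : bool) : inner_ok l a r ->
  tcnt e (if f then hr_act l a r else BNode l a r) = TN e l (is_min_node l a r (+) f) r.
Proof.
move=> I; move: (I) => /and3P[U Hn Hr].
case: f; last by rewrite /= (negbTE Hr) addbF.
rewrite hr_act_inner //= is_empty_relabel (negbTE Hr) hr_type // tcnt_relabel; last exact: hr_g_mono U.
by rewrite /TN addbT.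
Qed.

Lemma orbR_emptyP t : orbR BEmpty t -> t = BEmpty.
Proof. by move=> H; inversion H. Qed.

Lemma orbR_nodeP l a r t : orbR (BNode l a r) t ->
  exists f l1 r1, [/\ orbR l l1, orbR r r1 & t = if f then hr_act l1 a r1 else BNode l1 a r1].
Proof. by move=> H; inversion H; subst; exists f, l', r'. Qed.

Lemma HR_sub_node l a r l1 r1 : is_HR (BNode l a r) -> orbR l l1 -> orbR r r1 ->
  [/\ is_HR (BNode l1 a r1), is_min_node l1 a r1 = is_min_node l a r,
      is_HR l1, is_HR r1 & [/\ nleaves l1 = nleaves l, nleaves r1 = nleaves r,
                            is_empty l1 = is_empty l & is_empty r1 = is_empty r]].
Proof.
move=> H Hl Hr; have [U Hn HRl HRr] := HR_node H.
have [P1 H1 N1 E1] := orbR_props Hl HRl.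
have [P2 H2 N2 E2] := orbR_props Hr HRr.
have Pw : perm_eq (word (BNode l1 a r1)) (word (BNode l a r)).
  by rewrite /=; apply: perm_cat => //; rewrite perm_cons.
split => //.
  rewrite /is_HR (perm_uniq Pw) U /= (node_ok_perm a P1 P2) // Hn.
  by move: H1 H2 => /andP[_ ->] /andP[_ ->].
by rewrite /is_min_node (perm_all _ Pw).
Qed.

Lemma HR_all t : is_HR t -> all_nodes hr_node_ok t.
Proof. by case/andP. Qed.

Lemma exist_min t e : is_HR t -> ~~ is_empty t ->
  exists t', in_orb t t' /\ (tcnt e t').+1 = nleaves t.
Proof.
elim: t e => [//|l IHl a r IHr] e H _.
have [U Hn HRl HRr] := HR_node H.
case Er: (is_empty r).
  have El := HR_leaf Hn Er.
  exists (BNode l a r); split; first exact: orb_refl.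
  by rewrite /= Er El.
pose t0 := if is_empty l then e else ~~ tlast e l.
have [l' [Hl' Hl'c]] : exists l', in_orb l l' /\
      (is_empty l -> l' = l) /\ (~~ is_empty l -> (tcnt e l').+1 = nleaves l).
  case El: (is_empty l); first by exists l; split; [exact: orb_refl|split].
  have [l' [H1 H2]] := IHl e HRl (negbT El); by exists l'.
case: Hl'c => Hl'e Hl'n.
pose tt := if is_empty l then e else ~~ tlast e l'.
have [r' [Hr' Hr'n]] := IHr tt HRr (negbT Er).
have Ol := in_orb_orbR Hl' HRl.
have Or := in_orb_orbR Hr' HRr.
have [HN Hm HRl' HRr' [N1 N2 E1 E2]] := HR_sub_node H Ol Or.
have [U' Hn' _ _] := HR_node HN.
have I : inner_ok l' a r' by rewrite /inner_ok U' Hn' E2 Er.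
pose f := is_min_node l a r != tt.
exists (if f then hr_act l' a r' else BNode l' a r'); split.
  have T1 : in_orb (BNode l a r) (BNode l' a r').
    exact: in_orb_trans (in_orb_left a r Hl') (in_orb_right l' a Hr').
  case: (f); last exact: T1.
  exact: in_orb_trans T1 (in_orb_root _ _ _).
rewrite tcnt_flip // Hm /TN E1.
have -> : is_min_node l a r (+) f = tt by rewrite /f; case: (is_min_node l a r); case: (tt).
rewrite /= Er.
have -> : is_empty l && false = false by rewrite andbF.
case El: (is_empty l).
  rewrite /tt El in Hr'n *; rewrite eqxx /= add0n Hr'n.
  by case: (l) El.
rewrite /tt El in Hr'n *; rewrite negbK eqxx /=.
have := Hl'n (negbT El).
by move=> <-; rewrite -Hr'n addn0 addn1 addnS.
Qed.

Lemma arith1 (b : bool) x y p q : (x + b + 1 + y).+1 = p + q -> p <= x.+1 -> q <= y.+1 ->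
  [/\ x.+1 = p, b = false & y.+1 = q].
Proof. case: b => /= H1 H2 H3; [exfalso; lia | split => //; lia]. Qed.

Lemma arith0 (b : bool) y q : (b + y).+1 = q -> q <= y.+1 -> b = false /\ y.+1 = q.
Proof. case: b => /= H1 H2; [exfalso; lia | split => //; lia]. Qed.

Lemma uniq_min t : is_HR t -> forall e t1 t2, orbR t t1 -> orbR t t2 ->
  (tcnt e t1).+1 = nleaves t -> (tcnt e t2).+1 = nleaves t -> t1 = t2.
Proof.
elim: t => [|l IHl a r IHr] H e t1 t2 H1 H2.
  by rewrite (orbR_emptyP H1) (orbR_emptyP H2).
have [U Hn HRl HRr] := HR_node H.
have [f1 [l1 [r1 [Ol1 Or1 ->]]]] := orbR_nodeP H1.
have [f2 [l2 [r2 [Ol2 Or2 ->]]]] := orbR_nodeP H2.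
case Er: (is_empty r).
  have El := HR_leaf Hn Er.
  case: l El Ol1 Ol2 {IHl HRl H U Hn H1 H2} => // _ /orbR_emptyP -> /orbR_emptyP ->.
  case: r Er Or1 Or2 {IHr HRr} => // _ /orbR_emptyP -> /orbR_emptyP ->.
  by case: f1; case: f2; rewrite ?hr_actE.
have [HN1 Hm1 HRl1 HRr1 [Nl1 Nr1 El1 Er1]] := HR_sub_node H Ol1 Or1.
have [HN2 Hm2 HRl2 HRr2 [Nl2 Nr2 El2 Er2]] := HR_sub_node H Ol2 Or2.
have [U1 Hn1 _ _] := HR_node HN1.
have [U2 Hn2 _ _] := HR_node HN2.
have I1 : inner_ok l1 a r1 by rewrite /inner_ok U1 Hn1 Er1 Er.
have I2 : inner_ok l2 a r2 by rewrite /inner_ok U2 Hn2 Er2 Er.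
rewrite !tcnt_flip // Hm1 Hm2 /TN El1 El2.
set m1 := is_min_node l a r (+) f1.
set m2 := is_min_node l a r (+) f2.
have Nt : nleaves (BNode l a r) = nleaves l + nleaves r by rewrite /= Er andbF.
rewrite Nt.
have Lr1 := tcnt_lb m1 (HR_all HRr1); rewrite Nr1 in Lr1.
have Lr2 := tcnt_lb m2 (HR_all HRr2); rewrite Nr2 in Lr2.
case El: (is_empty l).
  have -> : nleaves l = 0 by case: (l) El.
  rewrite add0n => Q1 Q2.
  have [Em1 {}Q1] := arith0 Q1 Lr1.
  have [Em2 {}Q2] := arith0 Q2 Lr2.
  have Hm : m1 = m2 by move/negbFE/eqP: Em1 => <-; move/negbFE/eqP: Em2.
  have Hf : f1 = f2 by apply: (@addbI (is_min_node l a r)); exact: Hm.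
  have Hl1 : l1 = BEmpty by move: El1; rewrite El; case: (l1).
  have Hl2 : l2 = BEmpty by move: El2; rewrite El; case: (l2).
  have Hr : r1 = r2 by apply: (IHr HRr m1 r1 r2 Or1 Or2 Q1); rewrite Hm.
  by rewrite Hf Hl1 Hl2 Hr.
have Ll1 := tcnt_lb e (HR_all HRl1); rewrite Nl1 in Ll1.
have Ll2 := tcnt_lb e (HR_all HRl2); rewrite Nl2 in Ll2.
move=> Q1 Q2.
have [Ql1 Qb1 Qr1] := arith1 Q1 Ll1 Lr1.
have [Ql2 Qb2 Qr2] := arith1 Q2 Ll2 Lr2.
have Hl := IHl HRl e l1 l2 Ol1 Ol2 Ql1 Ql2.
have Hm : m1 = m2.
  move/negbFE/eqP: Qb1 => Qb1; move/negbFE/eqP: Qb2 => Qb2.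
  by rewrite -[m1]negbK -[m2]negbK -Qb1 -Qb2 Hl.
have Hf : f1 = f2 by apply: (@addbI (is_min_node l a r)); exact: Hm.
have Hr : r1 = r2 by apply: (IHr HRr m1 r1 r2 Or1 Or2 Qr1); rewrite Hm.
by rewrite Hf Hl Hr.
Qed.

Lemma alt_tree T : is_HR T -> ~~ is_empty T -> alt_len (word T) = (tcnt true T).+1.
Proof.
move=> H He; rewrite alt_len_eq ?word_ne //; last by case/andP: H.
by have [-> _] := word_chg true H He.
Qed.

Theorem mainTheorem2 (n : nat) (pi : seq nat) (Tpi : btree) :
  1 <= n ->
  perm_eq pi (iota 1 n) ->
  is_HR Tpi -> word Tpi = pi ->
  (forall T, in_orb Tpi T -> nleaves Tpi <= alt_len (word T)) /\
  (exists! T, in_orb Tpi T /\ alt_len (word T) = nleaves Tpi).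
Proof.
move=> Hn Hp H Hw.
have Ne : ~~ is_empty Tpi.
  apply/negP => E; move: Hp; rewrite -Hw.
  case: (Tpi) E => //= _ /perm_size; rewrite size_iota => Hs.
  by move: Hn; rewrite -Hs.
have Props : forall T, in_orb Tpi T ->
   [/\ orbR Tpi T, is_HR T, nleaves T = nleaves Tpi & ~~ is_empty T].
  move=> T HT; have O := in_orb_orbR HT H.
  have [_ HT' N E] := orbR_props O H.
  by split => //; rewrite E.
split.
  move=> T HT; have [_ HT' N E] := Props T HT.
  by rewrite alt_tree // -N; apply: tcnt_lb; case/andP: HT'.
have [T' [HT' Hc]] := exist_min true H Ne.
exists T'; split.
  split => //; have [_ H' _ E] := Props T' HT'.
  by rewrite alt_tree.
move=> T'' [HT'' Hc''].
have [O'' H'' _ E''] := Props T'' HT''.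
have [O' _ _ _] := Props T' HT'.
apply: (uniq_min H O' O'' Hc).
by rewrite -Hc'' alt_tree.
Qed.
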